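(* Let $T$ be a term rewriting system that is disjoint and has no collapsing rules. Then every reduction sequence of $T$ is convergent (i.e. $T$ is infinitary strongly normalising, $SN^\infty$).
   Context: $T=(\Sigma,R)$ with $\Sigma$ a finite signature and $R$ a set of rules $l\to r$ over finite or infinite terms, $l$ finite and not a variable, variables of $r$ occurring in $l$. $T$ is disjoint iff the set of function symbols occurring in left-hand sides is disjoint from the set of function symbols occurring in right-hand sides. A rule $l\to r$ is collapsing iff $r$ is a variable. Terms are finite or infinite trees; $d(t,u)=0$ if $t=u$, else $2^{-k}$ with $k$ the least depth where they differ; limits w.r.t. $d$. A reduction step $a=\langle t,p,\mu,\sigma\rangle$ has $t|_p=\sigma l$, target $t[\sigma r]_p$, depth $|p|$. A reduction sequence is an empty sequence $id_t$ or a sequence $\langle a_\alpha\rangle_{\alpha<\beta}$ ($\beta>0$ an ordinal) of steps with $src(a_{\alpha+1})=tgt(a_\alpha)$ for $\alpha+1<\beta$ and, for each limit ordinal $\beta_0<\beta$: $\lim_{\alpha\to\beta_0}tgt(a_\alpha)$ exists and equals $src(a_{\beta_0})$, and for every $n<\omega$ there is $\beta'<\beta_0$ such that every $a_\alpha$ with $\beta'<\alpha<\beta_0$ has depth $>n$. It is convergent iff it is empty, $\beta$ is a successor, or $\beta$ is a limit and $\lim_{\alpha\to\beta}tgt(a_\alpha)$ exists and the depth condition also holds at $\beta$. *)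

(* Defs.v *)
(* Terms (finite or infinite) are represented positionally: a term is a map
   from positions (sequences of child indices) to optional labels, where a
   label is a function symbol (inl f) or a variable (inr x, x : nat). *)
From mathcomp Require Import all_boot.

Set Implicit Arguments.
Unset Strict Implicit.
Unset Printing Implicit Defensive.

Section TRS.
Variables (F : finType) (ar : F -> nat).

Definition label := (F + nat)%type.
Definition position := seq nat.
Definition rawterm := position -> option label.

Definition wf_term (t : rawterm) : Prop :=
  t [::] <> None /\
  forall p : position,
    match t p with
    | Some (inl f) => forall i, t (rcons p i) <> None <-> i < ar f
    | _ => forall i, t (rcons p i) = None
    end.

Record term := Term { fn : rawterm; fn_wf : wf_term fn }.

Definition finite_term (t : rawterm) : Prop :=
  exists s : seq position, forall p, t p <> None -> p \in s.

Fixpoint subst_go (sigma : nat -> term) (r : rawterm) (pre rest : position)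
  : option label :=
  match r pre with
  | None => None
  | Some (inr x) => fn (sigma x) rest
  | Some (inl f) =>
      match rest with
      | [::] => Some (inl f)
      | i :: rest' => subst_go sigma r (rcons pre i) rest'
      end
  end.

Definition subst (sigma : nat -> term) (r : rawterm) : rawterm :=
  fun q => subst_go sigma r [::] q.

Definition replace (t : rawterm) (p : position) (s : rawterm) : rawterm :=
  fun q => if take (size p) q == p then s (drop (size p) q) else t q.

Record rule := Rule {
  lhs : term;
  rhs : term;
  lhs_finite : finite_term (fn lhs);
  lhs_not_var : exists f, fn lhs [::] = Some (inl f);
  rhs_vars : forall p x, fn rhs p = Some (inr x) -> exists q, fn lhs q = Some (inr x)
}.

Definition collapsing (rho : rule) : Prop := exists x, fn (rhs rho) [::] = Some (inr x).

Definition disjoint_trs (R : rule -> Prop) : Prop :=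
  forall rho rho' f p q, R rho -> R rho' ->
    fn (lhs rho) p = Some (inl f) -> fn (rhs rho') q = Some (inl f) -> False.

Definition no_collapsing (R : rule -> Prop) : Prop :=
  forall rho, R rho -> ~ collapsing rho.

Record step (R : rule -> Prop) := Step {
  src : term;
  pos : position;
  rl : rule;
  rl_in : R rl;
  sig : nat -> term;
  step_match : forall q, fn src (pos ++ q) = subst sig (fn (lhs rl)) q
}.

Definition tgt R (a : step R) : rawterm :=
  replace (fn (src a)) (pos a) (subst (sig a) (fn (rhs (rl a)))).

Definition depth R (a : step R) : nat := size (pos a).

(* d(t,u) < 2^-n  iff t and u agree at all positions of depth <= n *)
Definition agree_upto (n : nat) (t u : rawterm) : Prop :=
  forall p : position, size p <= n -> t p = u p.

(* ordinals beta are represented by well-ordered index types I (I = beta) *)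
Definition well_order (I : Type) (lt : I -> I -> Prop) : Prop :=
  well_founded lt /\ (forall x y z, lt x y -> lt y z -> lt x z) /\
  (forall x y, lt x y \/ x = y \/ lt y x).

Definition is_succ (I : Type) (lt : I -> I -> Prop) (x y : I) : Prop :=
  lt x y /\ forall z, lt x z -> lt z y -> False.

Definition is_limit (I : Type) (lt : I -> I -> Prop) (b : I) : Prop :=
  (exists g, lt g b) /\ forall g, lt g b -> exists d, lt g d /\ lt d b.

Definition reduction_sequence R (I : Type) (lt : I -> I -> Prop)
  (a : I -> step R) : Prop :=
  (forall x y, is_succ lt x y -> fn (src (a y)) = tgt (a x)) /\
  (forall b, is_limit lt b ->
     (forall n, exists b', lt b' b /\
        forall x, lt b' x -> lt x b -> agree_upto n (tgt (a x)) (fn (src (a b)))) /\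
     (forall n, exists b', lt b' b /\
        forall x, lt b' x -> lt x b -> n < depth (a x))).

Definition convergent R (I : Type) (lt : I -> I -> Prop) (a : I -> step R)
  : Prop :=
  (I -> False) \/
  (* beta is a successor ordinal: there is a last step *)
  (exists m : I, forall x, x = m \/ lt x m) \/
  ((exists t : term, forall n, exists b', forall x, lt b' x ->
        agree_upto n (tgt (a x)) (fn t)) /\
   (forall n, exists b', forall x, lt b' x -> n < depth (a x))).

End TRS.

(* Main.v *)
Require Import Defs.
From mathcomp Require Import all_boot.
From Stdlib Require Import Classical IndefiniteDescription.

Set Implicit Arguments.
Unset Strict Implicit.
Unset Printing Implicit Defensive.

Section Proof.
Variables (F : finType) (ar : F -> nat) (R : rule ar -> Prop).
Hypothesis Hdisj : disjoint_trs R.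
Hypothesis Hnc : no_collapsing R.
Variables (I : Type) (ltI : I -> I -> Prop) (a : I -> step R).
Hypothesis Hwo : well_order ltI.
Hypothesis Hrs : reduction_sequence ltI a.
Variable i0 : I.

Definition ev (P : I -> Prop) := exists b, forall x, ltI b x -> P x.

Lemma trans x y z : ltI x y -> ltI y z -> ltI x z.
Proof. exact: (proj1 (proj2 Hwo)). Qed.

Lemma upper2 u v : exists g, (g = u \/ g = v) /\ (forall x, ltI g x -> ltI u x /\ ltI v x).
Proof.
case: (proj2 (proj2 Hwo) u v) => [h|[h|h]].
- exists v; split; first by right. move=> x hx; split => //; exact: trans h hx.
- subst; exists v; split; first by left. by move=> x hx.
- exists u; split; first by left. move=> x hx; split => //; exact: trans h hx.
Qed.

Lemma ev_and P Q : ev P -> ev Q -> ev (fun x => P x /\ Q x).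
Proof.
move=> [b1 h1] [b2 h2]; have [g [_ hg]] := upper2 b1 b2.
exists g => x hx; have [? ?] := hg x hx; split; [exact: h1|exact: h2].
Qed.

Lemma ev_fin m (Q : nat -> I -> Prop) :
  (forall i, i < m -> ev (Q i)) -> ev (fun x => forall i, i < m -> Q i x).
Proof.
elim: m => [|m IH] H; first by exists i0 => x _ i.
have [b hb] := ev_and (IH (fun i hi => H i (ltnW hi))) (H m (ltnSn m)).
exists b => x hx i; rewrite ltnS leq_eqVlt => /orP [/eqP ->|hi].
  exact: (proj2 (hb x hx)).
exact: (proj1 (hb x hx)).
Qed.

Lemma step_root (s : step R) : exists f, fn (src s) (pos s) = Some (inl f) /\
  fn (lhs (rl s)) [::] = Some (inl f).
Proof.
have := step_match s [::]; rewrite cats0 /subst /=.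
case: (lhs_not_var (rl s)) => f Hf; rewrite Hf => ->; by exists f.
Qed.

Lemma tgt_root (s : step R) : exists g, tgt s (pos s) = Some (inl g) /\
  fn (rhs (rl s)) [::] = Some (inl g).
Proof.
rewrite /tgt /replace take_size eqxx drop_size /subst /=.
case E: (fn (rhs (rl s)) [::]) => [[g|x]|].
- by exists g.
- by exfalso; apply: (Hnc (rl_in s)); exists x.
- by exfalso; apply: (proj1 (fn_wf (rhs (rl s)))).
Qed.

Lemma tgt_other (s : step R) p : (forall r, pos s ++ r <> p) -> tgt s p = fn (src s) p.
Proof.
move=> H; rewrite /tgt /replace; case: eqP => // E; exfalso.
apply: (H (drop (size (pos s)) p)); by rewrite -{1}E cat_take_drop.
Qed.

Lemma succ_or_limit x0 y : ltI x0 y -> (exists x, is_succ ltI x y) \/ is_limit ltI y.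
Proof.
move=> hy; case: (classic (exists x, is_succ ltI x y)) => [h|h]; [by left|right].
split; first by exists x0.
move=> g hg; apply: NNPP => hn; apply: h; exists g; split => // z h1 h2.
by apply: hn; exists z.
Qed.

Lemma stable x0 p :
  (forall y, ltI x0 y -> fn (src (a y)) p = tgt (a x0) p -> forall r, pos (a y) ++ r <> p) ->
  forall y, ltI x0 y -> fn (src (a y)) p = tgt (a x0) p.
Proof.
move=> H y; elim/(well_founded_ind (proj1 Hwo)): y => y IH hy.
case: (succ_or_limit hy) => [[x [hxy hno]]|hlim].
- rewrite ((proj1 Hrs) x y (conj hxy hno)).
  case: (proj2 (proj2 Hwo) x x0) => [h|[->//|h]].
    by exfalso; exact: (hno x0 h hy).
  have e := IH x hxy h; rewrite tgt_other ?e //; exact: H.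
- have [b' [hb' hag]] := (proj1 ((proj2 Hrs) y hlim)) (size p).
  have [g [hgeq hg]] := upper2 b' x0.
  have hgy : ltI g y by case: hgeq => ->.
  have [d [hgd hdy]] := (proj2 hlim) g hgy.
  have [h1 h2] := hg d hgd.
  rewrite -(hag d h1 hdy p (leqnn _)).
  have e := IH d hdy h2; rewrite tgt_other ?e //; exact: H.
Qed.

Lemma nopref n s p : n < size s -> size p <= n -> forall r : seq nat, s ++ r <> p.
Proof.
move=> h1 h2 r E; move: h2; rewrite -E size_cat => h2.
have := leq_trans h1 (leq_trans (leq_addr (size r) _) h2); by rewrite ltnn.
Qed.

Lemma A_step p : ev (fun x => forall r, r <> [::] -> pos (a x) ++ r <> p) ->
  ev (fun x => forall r, pos (a x) ++ r <> p).
Proof.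
move=> [b hb].
case: (classic (exists x0, ltI b x0 /\ pos (a x0) = p)) => [[x0 [hx0 hp]]|hn].
- have Hy : forall y, ltI x0 y -> fn (src (a y)) p = tgt (a x0) p ->
      forall r, pos (a y) ++ r <> p.
    move=> y hy e r; case: (eqVneq r [::]) => [->|hr]; last first.
      exact: (hb y (trans hx0 hy) r (elimN eqP hr)).
    rewrite cats0 => ep.
    have [f [hf1 hf2]] := step_root (a y); have [g [hg1 hg2]] := tgt_root (a x0).
    move: e; rewrite -{1}ep hf1 -hp hg1 => [[efg]]; subst g.
    exact: (Hdisj (rl_in (a y)) (rl_in (a x0)) hf2 hg2).
  exists x0 => y hy; apply: (Hy y hy); exact: (@stable x0 p Hy y hy).
- exists b => x hx r; case: (eqVneq r [::]) => [->|hr]; last exact: (hb x hx r (elimN eqP hr)).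
  rewrite cats0 => e; apply: hn; by exists x.
Qed.

Lemma freeze p : ev (fun x => forall r, pos (a x) ++ r <> p).
Proof.
elim/last_ind: p => [|q i IH]; apply: A_step.
  exists i0 => x _ [|c r] // _; by case: (pos (a x)).
case: IH => b hb; exists b => x hx r hr.
case/lastP: r hr => [//|r' j] _; rewrite -rcons_cat => /eqP; rewrite eqseq_rcons => /andP [/eqP e _].
exact: (hb x hx r' e).
Qed.

Definition M := \max_(f : F) ar f.

Lemma bounded (t : term ar) p : fn t p <> None -> all (fun i => i < M) p.
Proof.
elim/last_ind: p => [//|q i IH] h; rewrite all_rcons.
have := (proj2 (fn_wf t)) q; case E: (fn t q) => [[f|x]|] H.
- rewrite IH ?E // andbT; have := (proj1 (H i)) h => hi.
  exact: leq_trans hi (leq_bigmax f).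
- by exfalso; apply: h; apply: H.
- by exfalso; apply: h; apply: H.
Qed.

Lemma Gk k : forall pre, ev (fun x => forall p, size p = k -> all (fun i => i < M) p ->
  pos (a x) <> pre ++ p).
Proof.
elim: k => [|k IH] pre.
  have [b hb] := freeze pre; exists b => x hx p /size0nil -> _; rewrite cats0; have := hb x hx [::]; by rewrite cats0.
have [b hb] := @ev_fin M (fun i x => forall p, size p = k -> all (fun j => j < M) p -> pos (a x) <> rcons pre i ++ p) (fun i _ => IH (rcons pre i)).
exists b => x hx [//|i p'] [hs] /= /andP [hi hp'].
rewrite -cat_rcons; exact: (hb x hx i hi p' hs hp').
Qed.

Lemma Dn n : ev (fun x => n < depth (a x)).
Proof.
have [b hb] := @ev_fin n.+1 (fun k x => forall p, size p = k -> all (fun j => j < M) p -> pos (a x) <> [::] ++ p) (fun k _ => Gk k [::]).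
exists b => x hx; rewrite /depth ltnNge; apply/negP => hle.
have [f [hf _]] := step_root (a x).
have hall := @bounded (src (a x)) (pos (a x)); rewrite hf in hall.
exact: (hb x hx (size (pos (a x))) hle (pos (a x)) erefl (hall ltac:(discriminate)) erefl).
Qed.

Lemma stableD b n : (forall x, ltI b x -> n < depth (a x)) ->
  forall x y, ltI b x -> ltI b y -> agree_upto n (fn (src (a x))) (fn (src (a y))).
Proof.
move=> hb.
have key : forall x y, ltI b x -> ltI x y -> agree_upto n (fn (src (a x))) (fn (src (a y))).
  move=> x y hx hxy p hp.
  rewrite (@stable x p _ y hxy).
    rewrite tgt_other //; exact: nopref (hb x hx) hp.
  move=> z hz _; apply: nopref hp; apply: hb; exact: trans hx hz.
move=> x y hx hy; case: (proj2 (proj2 Hwo) x y) => [h|[->//|h]]; first exact: key.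
move=> p hp; symmetry; exact: key.
Qed.

Lemma main_sec : convergent ltI a.
Proof.
case: (classic (exists m : I, forall x, x = m \/ ltI x m)) => [h|hnm].
  by right; left.
right; right.
have nomax : forall m, exists x, ltI m x.
  move=> m; apply: NNPP => hn; apply: hnm; exists m => x.
  case: (proj2 (proj2 Hwo) x m) => [h|[h|h]]; [by right|by left|].
  by exfalso; apply: hn; exists x.
have [B HB] : exists B : nat -> I, forall n x, ltI (B n) x -> n < depth (a x).
  exists (fun n => proj1_sig (constructive_indefinite_description _ (Dn n))).
  move=> n; exact: (proj2_sig (constructive_indefinite_description _ (Dn n))).
have [c Hc] : exists c : nat -> I, forall n, ltI (B n) (c n).
  exists (fun n => proj1_sig (constructive_indefinite_description _ (nomax (B n)))).
  move=> n; exact: (proj2_sig (constructive_indefinite_description _ (nomax (B n)))).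
have Ag : forall m n x y, m <= n -> ltI (B n) x -> ltI (B m) y ->
    agree_upto m (fn (src (a x))) (fn (src (a y))).
  move=> m n x y hmn hx hy.
  have [g [_ hg]] := upper2 (B n) (B m).
  have [z hz] := nomax g; have [h1 h2] := hg z hz.
  have S1 := @stableD (B n) m (fun w hw => leq_ltn_trans hmn (HB n w hw)) x z hx h1.
  have S2 := @stableD (B m) m (HB m) y z hy h2.
  move=> p hp; rewrite (S1 p hp) (S2 p hp) //.
pose t : rawterm F := fun p => fn (src (a (c (size p)))) p.
have twf : wf_term ar t.
  split.
    rewrite /t /=; exact: (proj1 (fn_wf _)).
  move=> p.
  have -> : t p = fn (src (a (c (size p).+1))) p.
    symmetry; apply: (Ag (size p) (size p).+1 _ _ (leqnSn _) (Hc _) (Hc _)) => //.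
  have := (proj2 (fn_wf (src (a (c (size p).+1))))) p.
  case: (fn (src (a (c (size p).+1))) p) => [[f|x]|] H i; rewrite /t size_rcons; exact: H.
split; last by move=> n; exact: Dn.
exists (@Term F ar t twf) => n.
exists (B n) => x hx p hp /=.
rewrite tgt_other; last by apply: nopref hp; exact: HB.
rewrite /t; apply: (Ag (size p) n x _ hp hx (Hc _)) => //.
Qed.

End Proof.

Theorem mainTheorem11 (F : finType) (ar : F -> nat) (R : rule ar -> Prop) :
  disjoint_trs R -> no_collapsing R ->
  forall (I : Type) (lt : I -> I -> Prop) (a : I -> step R),
    well_order lt -> reduction_sequence lt a -> convergent lt a.
Proof.
move=> Hd Hn I lt a Hwo Hrs.
case: (classic (exists i : I, True)) => [[i0 _]|hI].
  exact: (main_sec Hd Hn Hwo Hrs i0).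
left => i; apply: hI; by exists i.
Qed.
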